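(* Consider timing binary modulation with $T_b=1/R$: a transmitter molecule released at $s\in\{0,T_b/2\}$ (equiprobable bits) arrives at $s+t(r_\ell)$; let $z=z_{T_b/2}$ be the number of interfering molecules arriving in $[0,T_b/2]$, independent of $s$ and of $t(r_\ell)$, with mean $\mu$ and variance $\sigma^2>0$. For an integer $n\ge0$, the receiver decides $s=0$ iff the $(n+1)$th arriving molecule (counting interfering molecules and the transmitter's molecule) arrives no later than $T_b/2$. Let $\hat P_{b,\ell}=\frac12\Pr\{t(r_\ell)>T_b/2\}$ and assume $\hat P_{b,\ell}<\frac12$. Then the bit error rate is exactly $$P^\star_{b,\ell}(n)=\hat P_{b,\ell}\Pr\{z=n\}+\tfrac12\big(1-\Pr\{z=n\}\big).$$ If $\Pr\{z=n\}$ is replaced by the continuity-corrected Gaussian approximation $\Pr\{n-\tfrac12<Z<n+\tfrac12\}$ with $Z\sim\mathcal{N}(\mu,\sigma^2)$, the resulting expression, viewed as a function of real $n$, is minimized at $n=\mu$, with minimum value $$\frac12\Big[1+\big(2\hat P_{b,\ell}-1\big)\Big(1-2Q\Big(\frac{1}{2\sigma}\Big)\Big)\Big].$$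
   Context: $Q(x)=\frac{1}{\sqrt{2\pi}}\int_x^\infty e^{-u^2/2}du$ is the Gaussian tail function. $t(r_\ell)$ denotes the first passage time of the transmitter's molecule to the receiver, a positive random variable independent of $s$; with release time $T_b/2$ the molecule arrives strictly after $T_b/2$. *)

(* Defs.v *)
From Stdlib Require Import Reals Lra ClassicalEpsilon.
Open Scope R_scope.

(* Total definite integral: the Riemann integral of f on [a,b] when f is
   Riemann integrable there, 0 otherwise (the value is irrelevant then). *)
Definition RInt (f : R -> R) (a b : R) : R :=
  match excluded_middle_informative
          (exists v : R, exists pr : Riemann_integrable f a b, RiemannInt pr = v) with
  | left h => proj1_sig (constructive_indefinite_description _ h)
  | right _ => 0
  end.

Definition lim_at_infty (F : R -> R) (l : R) : Prop :=
  forall eps, 0 < eps -> exists B, forall b, B <= b -> Rabs (F b - l) < eps.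

Definition std_gauss (u : R) : R := / sqrt (2 * PI) * exp (- (u ^ 2) / 2).

Definition Qfun (x : R) : R :=
  match excluded_middle_informative
          (exists l, lim_at_infty (fun b => RInt std_gauss x b) l) with
  | left h => proj1_sig (constructive_indefinite_description _ h)
  | right _ => 0
  end.

Definition normal_pdf (mu sigma x : R) : R :=
  / (sigma * sqrt (2 * PI)) * exp (- ((x - mu) ^ 2) / (2 * sigma ^ 2)).

Definition gauss_prob (mu sigma a b : R) : R := RInt (normal_pdf mu sigma) a b.

Definition ind (b : bool) : R := if b then 1 else 0.

(* Model of the timing-modulation receiver.
   z = number of interfering molecules in [0,Tb/2], with pmf pz, independent of
   s and of t(r_l).  q = Pr{t(r_l) > Tb/2}.  s uniform on {0, Tb/2}.
   Number of molecules arriving in [0,Tb/2]: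
     s = 0    : z + 1[t <= Tb/2]
     s = Tb/2 : z        (transmitter molecule arrives strictly after Tb/2)
   Decide s = 0 iff the (n+1)th arrival is no later than Tb/2, i.e. iff the
   count in [0,Tb/2] is >= n+1.
   err_given_z n q k = Pr{error | z = k}. *)
Definition err_given_z (n : nat) (q : R) (k : nat) : R :=
  / 2 * ( q * ind (Nat.leb k n)                (* s=0, molecule late: count k *)
        + (1 - q) * ind (Nat.leb (S k) n) )    (* s=0, molecule on time: count k+1 *)
  + / 2 * ind (Nat.leb (S n) k).               (* s=Tb/2: count k, error iff k >= n+1 *)

Definition bit_error_rate (pz : nat -> R) (q : R) (n : nat) (v : R) : Prop :=
  infinite_sum (fun k => pz k * err_given_z n q k) v.

(* Main.v *)
Require Import Defs.
From Stdlib Require Import Reals Lra Lia ClassicalEpsilon.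
From HB Require Import structures.
From mathcomp Require all_boot all_order all_algebra all_classical all_reals all_analysis.
From mathcomp Require Rstruct Rstruct_topology.
From Coquelicot Require Coquelicot.
Open Scope R_scope.

Module MC.
Import all_boot all_order all_algebra all_classical all_reals all_analysis.
Import Rstruct Rstruct_topology.
Import Order.TTheory GRing.Theory Num.Theory numFieldNormedType.Exports.
Local Open Scope classical_set_scope.
Local Open Scope ring_scope.

Lemma dnbhs_unpack (x : R) (P : R -> Prop) : x^' P ->
  exists e : R, Rlt 0 e /\ forall y, y <> x -> Rlt (Rabs (y - x)) e -> P y.
Proof.
move=> H.
have : nbhs x (fun y => y != x -> P y) by exact: H.
move=> /nbhs_ballP[e /= e0 He].
exists e; split; first by apply/RltP.
move=> y yx /RltP ye; apply: He; last exact/eqP.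
rewrite /ball /= distrC -RabsE. exact ye.
Qed.

Lemma bridge (f : R -> R) (x l : R) : @derivable _ R^o R^o f x 1 -> derive1 (f : R^o -> R^o) x = l ->
  derivable_pt_lim f x l.
Proof.
move=> df <-.
have hc := df; rewrite /derivable in hc.
rewrite derive1E.
move=> eps /RltP eps0.
move/cvgrPdist_lt : hc => /(_ eps eps0) /dnbhs_unpack [d [d0 Hd]].
exists (mkposreal d d0) => h h0 hd.
have := Hd h h0; rewrite Rminus_0_r => /(_ hd) /RltP.
rewrite -RabsE Rabs_minus_sym /=.
move=> H; rewrite /derive; apply: Rle_lt_trans H; right; congr Rabs; congr (_ - _).
rewrite /GRing.scale /= mulr1 (addrC h x) RdivE mulrC //.
Qed.

Lemma atanE (x : R) : Ratan.atan x = atan x.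
Proof.
set D := fun y : R => Rminus (atan y) (Ratan.atan y).
have dD : forall y, derivable_pt_lim D y 0.
  move=> y.
  have h1 : derivable_pt_lim atan y ((1 + y ^+ 2)^-1).
    have [d1 d2] := is_derive1_atan y.
    apply: bridge => //. by rewrite derive1E.
  have h2 := Ratan.derivable_pt_lim_atan y.
  have := derivable_pt_lim_minus _ _ _ _ _ h1 h2.
  rewrite RpowE RinvE RplusE RminusE subrr. done.
pose pr : Ranalysis1.derivable D := fun y => exist _ 0 (dD y).
have cD := MVT.null_derivative_1 D pr (fun y => erefl).
have := cD x 0. rewrite /D atan0 Ratan.atan_0. move=> H. symmetry. apply: Rminus_diag_uniq. rewrite H. apply: Rminus_diag_eq. done.
Qed.

Lemma piE : pi = PI :> R.
Proof.
have := @atan1 R. rewrite -atanE Ratan.atan_1 => H.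
rewrite -(INRE 4) in H.
have E : INR 4 = 4%coqR by simpl; Lra.lra.
change (PI / 4 = pi * / INR 4)%coqR in H. rewrite E in H. Lra.lra.
Qed.
Definition Fg (x : R) : R := @gauss_integral_proof.integral0_gauss R x.

Lemma Fg_deriv (x : R) : Rlt 0 x -> @derivable _ R^o R^o Fg x 1 /\ derive1 (Fg : R^o -> R^o) x = gauss_fun x.
Proof.
move=> /RltP x0.
apply: (@continuous_FTC1 R gauss_fun (BLeft 0) _ (x + 1) _ _ _ _).
- by rewrite ltrDl.
- apply: continuous_compact_integrable => //; first exact: segment_compact.
  by apply: continuous_subspaceT; exact: continuous_gauss_fun.
- by rewrite /=; rewrite lte_fin.
- by move=> ?; exact: continuous_gauss_fun.
Qed.

Lemma Fg_bound (x : R) : Rle 0 x -> Rle 0 (Fg x) /\ Rle (Fg x) x.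
Proof.
move=> /RleP x0; split.
  apply/RleP; exact: gauss_integral_proof.integral0_gauss_ge0.
apply/RleP.
have E : \int[@lebesgue_measure R]_(t in `[0%R, x]) cst (1%R : R) t = x.
  rewrite Rintegral_cst//.
  have L := @lebesgue_measure_itv R `[0%R, x].
  rewrite /= lte_fin in L.
  move: x0; rewrite le_eqVlt => /orP [/eqP x0| x0].
    rewrite -x0 in L *. rewrite ltxx /= in L. 
    have F0 : fine (lebesgue_measure `[0%R, 0%R]%classic) = fine (0%E : \bar R) by congr fine; exact: L.
    exact: (eq_trans (f_equal (fun t => 1 * t) F0) (mulr0 _)).
  rewrite x0 /= in L.
  have F0 : fine (lebesgue_measure `[0%R, x]%classic) = fine ((x - 0)%:E : \bar R) by congr fine; exact: L.
  exact: (eq_trans (f_equal (fun t => 1 * t) F0) (etrans (mul1r _) (subr0 _))).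
rewrite -[X in _ <= X]E.
rewrite /Fg /gauss_integral_proof.integral0_gauss /=.
apply: le_Rintegral => //=.
- apply: continuous_compact_integrable => //; first exact: segment_compact.
  by apply: continuous_subspaceT; exact: continuous_gauss_fun.
- apply: continuous_compact_integrable => //; first exact: segment_compact.
  by apply: continuous_subspaceT => z; exact: cvg_cst.
- move=> t _; exact: gauss_fun_le1.
Qed.

Lemma Fg_lim (eps : R) : Rlt 0 eps -> exists B : R, forall b : R, Rle B b ->
  Rlt (Rabs (Rminus (Fg b * Fg b) (PI / 4))) eps.
Proof.
move=> /RltP eps0.
have H := @gauss_integral_proof.cvg_integral0_gauss_sqr R.
move/cvgrPdist_lt: H => /(_ eps eps0) [M [_ HM]].
exists (M + 1) => b /RleP Mb.
apply/RltP. rewrite RabsE RminusE distrC.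
have := HM b. rewrite expr2 piE -(INRE 4).
have E : INR 4 = 4%coqR by simpl; Lra.lra.
rewrite E. apply.
by apply: lt_le_trans Mb; rewrite ltrDl.
Qed.

Lemma Fg_deriv_std (x : R) : Rlt 0 x -> derivable_pt_lim Fg x (exp (- (x ^ 2))).
Proof.
move=> x0. have [d1 d2] := @Fg_deriv x x0.
rewrite RexpE RpowE RoppE.
exact: bridge d1 d2.
Qed.
End MC.

Module CQ.
Import Coquelicot.Coquelicot.

Lemma exp_mono_le x y : x <= y -> exp x <= exp y.
Proof. intros [H|H]. left; apply exp_increasing; auto. subst; lra. Qed.

Definition g (t : R) : R := exp (- (t ^ 2)).
Definition Phi (y : R) : R := RInt std_gauss 0 y.

Lemma cont_std x : continuous std_gauss x.
Proof. apply (@ex_derive_continuous R_AbsRing R_NormedModule). unfold std_gauss. auto_derive. auto. Qed.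
Lemma cont_g x : continuous g x.
Proof. apply (@ex_derive_continuous R_AbsRing R_NormedModule). unfold g. auto_derive. auto. Qed.
Lemma cont_normal m s x : continuous (normal_pdf m s) x.
Proof. apply (@ex_derive_continuous R_AbsRing R_NormedModule). unfold normal_pdf. auto_derive. auto. Qed.

Lemma exR_std a b : ex_RInt std_gauss a b.
Proof. apply (@ex_RInt_continuous R_CompleteNormedModule). intros; apply cont_std. Qed.
Lemma exR_g a b : ex_RInt g a b.
Proof. apply (@ex_RInt_continuous R_CompleteNormedModule). intros; apply cont_g. Qed.

Lemma DRInt_eq f a b : (forall x, continuous f x) -> Defs.RInt f a b = RInt f a b.
Proof.
  intros Hc. assert (Hex: ex_RInt f a b) by (apply (@ex_RInt_continuous R_CompleteNormedModule); auto).
  pose proof (ex_RInt_Reals_0 _ _ _ Hex) as pr.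
  unfold Defs.RInt. destruct excluded_middle_informative as [h|h].
  - destruct (constructive_indefinite_description _ h) as [v Hv]. simpl.
    destruct Hv as [pr' Hpr']. rewrite <- Hpr', (RInt_Reals f a b pr'). reflexivity.
  - exfalso. apply h. exists (RiemannInt pr), pr. reflexivity.
Qed.

Lemma g_le1 t : Rabs (g t) <= 1.
Proof.
  unfold g. rewrite Rabs_pos_eq by (apply Rlt_le, exp_pos).
  rewrite <- exp_0. apply exp_mono_le. pose proof (pow2_ge_0 t). lra.
Qed.

Lemma RInt_g_Fg b : 0 < b -> RInt g 0 b = MC.Fg b.
Proof.
  intros hb.
  assert (key: forall e, 0 < e < b -> Rabs (RInt g 0 b - MC.Fg b) <= 2*e).
  { intros e [he1 he2].
    assert (H1: RInt g e b = MC.Fg b - MC.Fg e).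
    { apply is_RInt_unique. apply (is_RInt_derive MC.Fg g).
      - intros x Hx. apply is_derive_Reals. apply MC.Fg_deriv_std.
        rewrite Rmin_left in Hx by lra. lra.
      - intros x _. apply cont_g. }
    assert (H2: RInt g 0 b = RInt g 0 e + RInt g e b).
    { symmetry. apply (RInt_Chasles g 0 e b); apply exR_g. }
    assert (H3: Rabs (RInt g 0 e) <= (e - 0) * 1).
    { apply abs_RInt_le_const. lra. apply exR_g. intros t _. apply g_le1. }
    destruct (MC.Fg_bound e) as [H4 H5]; [lra|].
    rewrite H2, H1. replace (RInt g 0 e + (MC.Fg b - MC.Fg e) - MC.Fg b)
      with (RInt g 0 e - MC.Fg e) by ring.
    apply Rle_trans with (Rabs (RInt g 0 e) + Rabs (MC.Fg e)).
    + unfold Rminus. rewrite <- (Rabs_Ropp (MC.Fg e)). apply Rabs_triang.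
    + rewrite (Rabs_pos_eq (MC.Fg e)) by lra. lra. }
  set (d := RInt g 0 b - MC.Fg b) in *.
  destruct (Req_dec d 0) as [Hd|Hd]; [unfold d in Hd; lra|].
  exfalso. pose proof (Rabs_pos_lt d Hd) as Hp.
  set (e := Rmin (b/2) (Rabs d / 4)).
  assert (0 < e) by (unfold e; apply Rmin_glb_lt; lra).
  assert (e <= b/2) by (apply Rmin_l).
  assert (e <= Rabs d / 4) by (apply Rmin_r).
  specialize (key e ltac:(lra)). lra.
Qed.


Lemma RInt_g_lim eps : 0 < eps -> exists B, forall b, B <= b -> Rabs (RInt g 0 b - sqrt PI / 2) < eps.
Proof.
  intros he.
  set (s := sqrt PI / 2).
  assert (hs : 0 < s) by (unfold s; pose proof (sqrt_lt_R0 PI PI_RGT_0); lra).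
  assert (hss : s * s = PI / 4).
  { unfold s. replace (sqrt PI / 2 * (sqrt PI / 2)) with (sqrt PI * sqrt PI / 4) by field.
    rewrite sqrt_sqrt by (apply Rlt_le, PI_RGT_0). reflexivity. }
  destruct (MC.Fg_lim (eps * s)) as [B HB]; [nra|].
  exists (Rmax B 1). intros b Hb.
  assert (hb1 : 1 <= b) by (eapply Rle_trans; [apply Rmax_r|exact Hb]).
  assert (hbB : B <= b) by (eapply Rle_trans; [apply Rmax_l|exact Hb]).
  rewrite RInt_g_Fg by lra.
  destruct (MC.Fg_bound b) as [F0 _]; [lra|].
  specialize (HB b hbB).
  set (F := MC.Fg b) in *.
  assert (E : Rabs (F - s) * (F + s) = Rabs (F * F - PI / 4)).
  { rewrite <- hss. rewrite <- (Rabs_pos_eq (F + s)) by lra. rewrite <- Rabs_mult.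
    f_equal. ring. }
  apply Rmult_lt_reg_r with s; [lra|].
  apply Rle_lt_trans with (Rabs (F - s) * (F + s)).
  - apply Rmult_le_compat_l. apply Rabs_pos. lra.
  - rewrite E. exact HB.
Qed.

Lemma sqrt2_pos : 0 < sqrt 2.
Proof. apply sqrt_lt_R0. lra. Qed.

Lemma scalR a b : scal a b = a * b.
Proof. reflexivity. Qed.

Lemma RInt_scal_R f a b l : ex_RInt f a b -> RInt (fun x => l * f x) a b = l * RInt f a b.
Proof. intros H. exact (RInt_scal f a b l H). Qed.
Lemma RInt_comp_lin_R f u v a b : ex_RInt f (u*a+v) (u*b+v) ->
  RInt (fun y => u * f (u*y+v)) a b = RInt f (u*a+v) (u*b+v).
Proof. intros H. exact (RInt_comp_lin f u v a b H). Qed.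

Lemma Phi_g Y : Phi Y = / sqrt (2 * PI) * sqrt 2 * RInt g 0 (Y / sqrt 2).
Proof.
  pose proof sqrt2_pos as h2.
  unfold Phi.
  assert (E1 : RInt std_gauss 0 Y = RInt (fun u => scal (/ sqrt (2 * PI)) (scal (sqrt 2) (scal (/ sqrt 2) (g (/ sqrt 2 * u + 0))))) 0 Y).
  { apply RInt_ext. intros x _. rewrite !scalR. unfold std_gauss, g.
    rewrite <- (Rmult_assoc (sqrt 2)), Rinv_r, Rmult_1_l by lra.
    f_equal. f_equal.
    replace ((/ sqrt 2 * x + 0) ^ 2) with (x ^ 2 / (sqrt 2 * sqrt 2)) by (field; lra).
    rewrite sqrt_sqrt by lra. field. }
  rewrite E1.
  assert (Hc : forall a b, ex_RInt (fun u => scal (/ sqrt 2) (g (/ sqrt 2 * u + 0))) a b).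
  { intros. apply (@ex_RInt_continuous R_CompleteNormedModule). intros.
    apply (@ex_derive_continuous R_AbsRing R_NormedModule). unfold scal; simpl; unfold mult; simpl. unfold g. auto_derive. auto. }
  rewrite (@RInt_scal R_CompleteNormedModule).
  2:{ apply (@ex_RInt_continuous R_CompleteNormedModule). intros.
    apply (@ex_derive_continuous R_AbsRing R_NormedModule). unfold scal; simpl; unfold mult; simpl. unfold g. auto_derive. auto. }
  rewrite (@RInt_scal R_CompleteNormedModule) by apply Hc.
  assert (H : RInt (fun y => scal (/ sqrt 2) (g (/ sqrt 2 * y + 0))) 0 Y = RInt g 0 (Y / sqrt 2)).
  { replace (Y / sqrt 2) with (/ sqrt 2 * Y + 0) by (field; lra).
    replace (RInt g 0 (/ sqrt 2 * Y + 0)) with (RInt g (/ sqrt 2 * 0 + 0) (/ sqrt 2 * Y + 0)) by (f_equal; ring).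
    exact (RInt_comp_lin g _ _ _ _ (exR_g _ _)). }
  rewrite H, !scalR. change (scal (sqrt 2) (RInt g 0 (Y / sqrt 2))) with (sqrt 2 * RInt g 0 (Y / sqrt 2)). ring.
Qed.

Lemma Kconst : / sqrt (2 * PI) * sqrt 2 * (sqrt PI / 2) = / 2.
Proof.
  pose proof sqrt2_pos. pose proof (sqrt_lt_R0 PI PI_RGT_0).
  rewrite sqrt_mult by (lra || (apply Rlt_le, PI_RGT_0)).
  field. lra.
Qed.

Lemma Phi_lim eps : 0 < eps -> exists B, forall b, B <= b -> Rabs (Phi b - / 2) < eps.
Proof.
  intros he.
  pose proof sqrt2_pos as h2.
  set (K := / sqrt (2 * PI) * sqrt 2).
  assert (hK : 0 < K).
  { unfold K. apply Rmult_lt_0_compat; [|lra]. apply Rinv_0_lt_compat, sqrt_lt_R0. pose proof PI_RGT_0; lra. }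
  destruct (RInt_g_lim (eps / K)) as [B HB]. apply Rdiv_lt_0_compat; lra.
  exists (sqrt 2 * B). intros b Hb.
  rewrite Phi_g. fold K.
  assert (HB' := HB (b / sqrt 2) ltac:(apply (Rmult_le_reg_l (sqrt 2)); [lra|]; replace (sqrt 2 * (b / sqrt 2)) with b by (field; lra); lra)).
  rewrite <- Kconst. fold K.
  replace (K * RInt g 0 (b / sqrt 2) - K * (sqrt PI / 2)) with (K * (RInt g 0 (b / sqrt 2) - sqrt PI / 2)) by ring.
  rewrite Rabs_mult, (Rabs_pos_eq K) by lra.
  apply Rmult_lt_reg_l with (/ K). apply Rinv_0_lt_compat; lra.
  replace (/ K * (K * Rabs (RInt g 0 (b / sqrt 2) - sqrt PI / 2))) with (Rabs (RInt g 0 (b / sqrt 2) - sqrt PI / 2)) by (field; lra).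
  replace (/ K * eps) with (eps / K) by (field; lra). exact HB'.
Qed.

Lemma std_even u : std_gauss (- u) = std_gauss u.
Proof. unfold std_gauss. replace ((- u) ^ 2) with (u ^ 2) by ring. reflexivity. Qed.

Lemma Phi_odd y : Phi (- y) = - Phi y.
Proof.
  unfold Phi.
  pose proof (RInt_comp_lin_R std_gauss (-1) 0 0 y (exR_std _ _)) as H.
  replace (-1 * 0 + 0) with 0 in H by ring.
  replace (-1 * y + 0) with (- y) in H by ring.
  rewrite <- H.
  rewrite (RInt_ext _ (fun t => (-1) * (std_gauss t))).
  2:{ intros x _. replace (-1 * x + 0) with (- x) by ring. rewrite std_even. reflexivity. }
  rewrite RInt_scal_R by apply exR_std. ring.
Qed.

Lemma RInt_std_Phi a b : RInt std_gauss a b = Phi b - Phi a.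
Proof.
  unfold Phi. pose proof (RInt_Chasles std_gauss 0 a b (exR_std _ _) (exR_std _ _)) as H.
  change (plus ?x ?y) with (x + y) in H.
  lra.
Qed.

Lemma RInt_shift v a b : RInt (fun t => std_gauss (t + v)) a b = Phi (b + v) - Phi (a + v).
Proof.
  pose proof (RInt_comp_lin_R std_gauss 1 v a b (exR_std _ _)) as H.
  replace (1 * a + v) with (a + v) in H by ring.
  replace (1 * b + v) with (b + v) in H by ring.
  rewrite <- RInt_std_Phi, <- H.
  apply RInt_ext. intros x _.
  rewrite !Rmult_1_l. reflexivity.
Qed.

Lemma D_max_pos b c : 0 < c -> 0 <= b -> Phi (b + c) - Phi (b - c) <= Phi c - Phi (- c).
Proof.
  intros hc hb.
  assert (H : RInt (fun t => std_gauss (t + c)) 0 b <= RInt (fun t => std_gauss (t + - c)) 0 b).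
  { apply RInt_le. exact hb.
    - apply (@ex_RInt_continuous R_CompleteNormedModule). intros. apply (@ex_derive_continuous R_AbsRing R_NormedModule). unfold std_gauss. auto_derive. auto.
    - apply (@ex_RInt_continuous R_CompleteNormedModule). intros. apply (@ex_derive_continuous R_AbsRing R_NormedModule). unfold std_gauss. auto_derive. auto.
    - intros x [hx1 hx2]. unfold std_gauss. apply Rmult_le_compat_l.
      + apply Rlt_le, Rinv_0_lt_compat, sqrt_lt_R0. pose proof PI_RGT_0. lra.
      + apply exp_mono_le. nra. }
  rewrite !RInt_shift in H.
  replace (0 + c) with c in H by ring. replace (0 + - c) with (- c) in H by ring.
  replace (b + - c) with (b - c) in H by ring. lra.
Qed.

Lemma D_max b c : 0 < c -> Phi (b + c) - Phi (b - c) <= Phi c - Phi (- c).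
Proof.
  intros hc. destruct (Rle_or_lt 0 b) as [hb|hb].
  - apply D_max_pos; auto.
  - replace (Phi (b + c) - Phi (b - c)) with (Phi (- b + c) - Phi (- b - c)).
    + apply D_max_pos; lra.
    + replace (- b + c) with (- (b - c)) by ring. replace (- b - c) with (- (b + c)) by ring.
      rewrite !Phi_odd. ring.
Qed.

Lemma gauss_prob_Phi m s a b : 0 < s ->
  gauss_prob m s a b = Phi ((b - m) / s) - Phi ((a - m) / s).
Proof.
  intros hs. unfold gauss_prob. rewrite DRInt_eq by apply cont_normal.
  pose proof (RInt_comp_lin_R std_gauss (/ s) (- m / s) a b (exR_std _ _)) as H.
  replace (/ s * a + - m / s) with ((a - m) / s) in H by (field; lra).
  replace (/ s * b + - m / s) with ((b - m) / s) in H by (field; lra).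
  rewrite <- RInt_std_Phi, <- H.
  apply RInt_ext. intros x _.
  unfold normal_pdf, std_gauss.
  pose proof (sqrt_lt_R0 (2 * PI) ltac:(pose proof PI_RGT_0; lra)).
  rewrite Rinv_mult. rewrite Rmult_assoc. f_equal. f_equal. f_equal.
  field. lra.
Qed.

Lemma lim_unique F l1 l2 : lim_at_infty F l1 -> lim_at_infty F l2 -> l1 = l2.
Proof.
  intros H1 H2. destruct (Req_dec l1 l2) as [|hne]; auto. exfalso.
  pose proof (Rabs_pos_lt (l1 - l2) ltac:(lra)) as hp.
  destruct (H1 (Rabs (l1 - l2) / 2) ltac:(lra)) as [B1 HB1].
  destruct (H2 (Rabs (l1 - l2) / 2) ltac:(lra)) as [B2 HB2].
  specialize (HB1 (Rmax B1 B2) (Rmax_l _ _)). specialize (HB2 (Rmax B1 B2) (Rmax_r _ _)).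
  set (v := F (Rmax B1 B2)) in *.
  assert (Rabs (l1 - l2) <= Rabs (v - l2) + Rabs (v - l1)).
  { replace (l1 - l2) with ((v - l2) - (v - l1)) by ring.
    unfold Rminus at 1. rewrite <- (Rabs_Ropp (v - l1)). apply Rabs_triang. }
  lra.
Qed.

Lemma Qfun_Phi c : Qfun c = / 2 - Phi c.
Proof.
  assert (HL : lim_at_infty (fun b => Defs.RInt std_gauss c b) (/ 2 - Phi c)).
  { intros eps he. destruct (Phi_lim eps he) as [B HB]. exists B. intros b hb.
    rewrite DRInt_eq by apply cont_std. rewrite RInt_std_Phi.
    replace (Phi b - Phi c - (/ 2 - Phi c)) with (Phi b - / 2) by ring. auto. }
  unfold Qfun. destruct excluded_middle_informative as [h|h].
  - destruct (constructive_indefinite_description _ h) as [l Hl]. simpl.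
    eapply lim_unique; eauto.
  - exfalso. apply h. eauto.
Qed.

End CQ.

Module P1.
Import Coquelicot.Coquelicot.

Lemma err_val n q k : err_given_z n q k = / 2 + (q / 2 - / 2) * (if Nat.eqb k n then 1 else 0).
Proof.
  unfold err_given_z.
  destruct (Nat.eqb_spec k n), (Nat.leb_spec k n), (Nat.leb_spec (S k) n), (Nat.leb_spec (S n) k);
    try lia; unfold Defs.ind; lra.
Qed.

Lemma psum_ind (n : nat) (c : R) m :
  sum_f_R0 (fun k => if Nat.eqb k n then c else 0) m = if Nat.ltb m n then 0 else c.
Proof.
  induction m as [|m IH].
  - simpl. destruct n; simpl; reflexivity.
  - cbn [sum_f_R0]. rewrite IH.
    destruct (Nat.ltb_spec m n), (Nat.ltb_spec (S m) n), (Nat.eqb_spec (S m) n); try lia; lra.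
Qed.

Lemma sum_ind (n : nat) (c : R) : infinite_sum (fun k => if Nat.eqb k n then c else 0) c.
Proof.
  intros eps he. exists n. intros m hm. rewrite psum_ind.
  destruct (Nat.ltb_spec m n); try lia. unfold R_dist. rewrite Rminus_diag, Rabs_R0. lra.
Qed.

Lemma part1 (pz : nat -> R) q n : infinite_sum pz 1 ->
  bit_error_rate pz q n (q / 2 * pz n + / 2 * (1 - pz n)).
Proof.
  intros H1. unfold bit_error_rate.
  apply is_series_Reals.
  apply is_series_Reals in H1.
  pose proof (sum_ind n (pz n)) as H2. apply is_series_Reals in H2.
  pose proof (is_series_plus _ _ _ _ (is_series_scal_l (/ 2) _ _ H1) (is_series_scal_l (q / 2 - / 2) _ _ H2)) as H.
  assert (E : (plus (scal (/ 2) 1) (scal (q / 2 - / 2) (pz n)) : R) = q / 2 * pz n + / 2 * (1 - pz n)).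
  { unfold plus, scal; simpl. unfold mult; simpl. ring. }
  eapply is_series_ext; [| exact (eq_rect _ (fun l => is_series _ l) H _ E)].
  intros k. simpl. unfold plus, scal; simpl. unfold mult; simpl. rewrite err_val.
  destruct (Nat.eqb_spec k n); [subst|]; ring.
Qed.
End P1.

Theorem theorem6
  (pz : nat -> R) (q mu sigma : R)
  (pz_nonneg : forall k, 0 <= pz k)
  (pz_sum : infinite_sum pz 1)
  (pz_mean : infinite_sum (fun k => INR k * pz k) mu)
  (pz_var : infinite_sum (fun k => (INR k - mu) ^ 2 * pz k) (sigma ^ 2))
  (sigma_pos : 0 < sigma)
  (q_range : 0 <= q <= 1)
  (Phat_lt : q / 2 < / 2) :
  let Phat := q / 2 in
  (forall n : nat,
     bit_error_rate pz q n (Phat * pz n + / 2 * (1 - pz n))) /\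
  (let G := fun x : R =>
       Phat * gauss_prob mu sigma (x - / 2) (x + / 2)
       + / 2 * (1 - gauss_prob mu sigma (x - / 2) (x + / 2)) in
   (forall x : R, G mu <= G x) /\
   G mu = / 2 * (1 + (2 * Phat - 1) * (1 - 2 * Qfun (1 / (2 * sigma))))).
Proof.
  intros Phat. split.
  - intros n. apply P1.part1; auto.
  - intros G.
    set (c := / (2 * sigma)).
    assert (hc : 0 < c) by (unfold c; apply Rinv_0_lt_compat; lra).
    assert (HP : forall x, gauss_prob mu sigma (x - / 2) (x + / 2) =
       CQ.Phi ((x - mu) / sigma + c) - CQ.Phi ((x - mu) / sigma - c)).
    { intros x. rewrite CQ.gauss_prob_Phi by auto. unfold c. f_equal; f_equal; field; lra. }
    assert (Pmu : gauss_prob mu sigma (mu - / 2) (mu + / 2) = 2 * CQ.Phi c).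
    { rewrite HP. replace ((mu - mu) / sigma) with 0 by (field; lra).
      rewrite Rplus_0_l. replace (0 - c) with (- c) by ring. rewrite CQ.Phi_odd. ring. }
    split.
    + intros x. unfold G. pose proof (CQ.D_max ((x - mu) / sigma) c hc) as HD.
      rewrite Pmu, HP. rewrite CQ.Phi_odd in HD. unfold Phat in *.
      set (P := CQ.Phi ((x - mu) / sigma + c) - CQ.Phi ((x - mu) / sigma - c)) in *.
      nra.
    + unfold G. rewrite Pmu, CQ.Qfun_Phi.
      replace (1 / (2 * sigma)) with c by (unfold c; field; lra). field.
Qed.
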